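(* Let $P$ be a finite $(3+1)$-free poset with clone sets $C_1,\dots,C_r$ and tangles $T_1,\dots,T_s$ (the parts of $P$, which partition $P$). For each part $X$, regard $\mathrm{Aut}(X)$, the automorphism group of the induced subposet on $X$, as a group of permutations of $P$ acting as the identity on $P\setminus X$. Then each such permutation is an automorphism of $P$, and \[\mathrm{Aut}(P)=\prod_{i=1}^r\mathrm{Aut}(C_i)\times\prod_{j=1}^s\mathrm{Aut}(T_j),\] i.e. the natural map from this direct product to $\mathrm{Aut}(P)$ is a group isomorphism.
   Context: A poset $P$ is $(3+1)$-free if there are no $a,b,c,d\in P$ with $a<b<c$ and $d$ incomparable to each of $a,b,c$. For $a\in P$ let $D_a=\{x\in P:x<a\}$, $U_a=\{x\in P:x>a\}$. Write $a\mathrel{\top}b$ if neither of $D_a,D_b$ contains the other, $a\mathrel{\bot}b$ if neither of $U_a,U_b$ contains the other, and $a\approx b$ if $D_a=D_b$ and $U_a=U_b$. A top of a tangle is a subset $A\subseteq P$ with $|A|\ge2$ that is a connected component of the graph on $P$ with edges $\{a,b\}$ for $a\mathrel{\top}b$; a bottom of a tangle is defined in the same way using $\bot$. A top $A$ and bottom $B$ are matched if there are distinct $a_1,a_2\in A$, $b_1,b_2\in B$ with $b_1<a_1$, $b_2<a_2$ and the pairs $\{a_1,a_2\},\{b_1,b_2\},\{b_1,a_2\},\{b_2,a_1\}$ incomparable; in a $(3+1)$-free poset this is a perfect matching between tops and bottoms of tangles. A tangle is a matched pair $(A,B)$, identified with the set $A\cup B$ and its induced subposet. A clone set is an equivalence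 class of $\approx$ restricted to $P\setminus\bigcup_j (A_j\cup B_j)$, where $(A_j,B_j)$ range over the tangles. Clone sets and tangles are called the parts of $P$. *)

(* Defs.v *)
From HB Require Import structures.
From mathcomp Require Import all_boot all_order all_fingroup.
Set Implicit Arguments. Unset Strict Implicit. Unset Printing Implicit Defensive.
Import Order.TTheory.
Local Open Scope order_scope.

Section PosetParts.
Variables (disp : Order.disp_t) (T : finPOrderType disp).

Definition free31 : bool :=
  [forall a : T, forall b : T, forall c : T, forall d : T,
     ~~ [&& a < b, b < c, ~~ (d >=< a), ~~ (d >=< b) & ~~ (d >=< c)]].

Definition Dset (a : T) : {set T} := [set x | x < a].
Definition Uset (a : T) : {set T} := [set x | a < x].

Definition topr : rel T := fun a b =>
  ~~ (Dset a \subset Dset b) && ~~ (Dset b \subset Dset a).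
Definition botr : rel T := fun a b =>
  ~~ (Uset a \subset Uset b) && ~~ (Uset b \subset Uset a).
Definition approx : rel T := fun a b => (Dset a == Dset b) && (Uset a == Uset b).

Definition big_components (e : rel T) : {set {set T}} :=
  [set A : {set T} | (1 < #|A|)%N && [exists a, A == [set y | connect e a y]]].

Definition tops : {set {set T}} := big_components topr.
Definition bottoms : {set {set T}} := big_components botr.

Definition matched (A B : {set T}) : bool :=
  [exists a1 in A, exists a2 in A, exists b1 in B, exists b2 in B,
    [&& a1 != a2, b1 != b2, b1 < a1, b2 < a2,
        ~~ (a1 >=< a2), ~~ (b1 >=< b2), ~~ (b1 >=< a2) & ~~ (b2 >=< a1)]].

(* tangles, identified with the union of their top and bottom *)
Definition tangles : {set {set T}} :=
  [set A :|: B | A in tops, B in bottoms & matched A B].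

Definition tangle_free_part : {set T} := ~: \bigcup_(X in tangles) X.

Definition clone_sets : {set {set T}} :=
  [set [set y in tangle_free_part | approx x y] | x in tangle_free_part].

Definition parts : {set {set T}} := clone_sets :|: tangles.

Definition AutP : {set {perm T}} :=
  [set s : {perm T} | [forall x, forall y, (s x <= s y) == (x <= y)]].

Definition AutPart (X : {set T}) : {set {perm T}} :=
  [set s : {perm T} | perm_on X s &&
     [forall x in X, forall y in X, (s x <= s y) == (x <= y)]].

End PosetParts.

(* Main.v *)
Require Import Defs.
From HB Require Import structures.
From mathcomp Require Import all_boot all_order all_fingroup.
Set Implicit Arguments. Unset Strict Implicit. Unset Printing Implicit Defensive.
Import Order.TTheory.
Local Open Scope order_scope.

Section Basic.
Variables (disp : Order.disp_t) (T : finPOrderType disp).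
Hypothesis H31 : free31 T.
Implicit Types a b c d x y z : T.
Local Notation br := (@botr _ T).
Local Notation tr := (@topr _ T).

Definition inc x y := ~~ (x >=< y).

Lemma incC x y : inc x y = inc y x.
Proof. by rewrite /inc comparable_sym. Qed.

Lemma inc_lt x y : inc x y -> ~~ (x < y).
Proof. by apply: contra => /lt_comparable. Qed.

Lemma inc_gt x y : inc x y -> ~~ (y < x).
Proof. by rewrite incC; apply: inc_lt. Qed.

Lemma inc_neq x y : inc x y -> x != y.
Proof. by apply: contra => /eqP ->; rewrite /inc comparablexx. Qed.

Lemma cmp3 x y : x >=< y -> [\/ x < y, y < x | x = y].
Proof.
case/orP=> h; rewrite le_eqVlt in h; case/orP: h => [/eqP->|h].
- by apply: Or33.
- by apply: Or31.
- by apply: Or33.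
- by apply: Or32.
Qed.

Lemma notinc x y : ~~ (x < y) -> ~~ (y < x) -> x != y -> inc x y.
Proof.
move=> h1 h2 h3; apply/negP => /cmp3 [h|h|h]; first by rewrite h in h1.
  by rewrite h in h2.
by rewrite h eqxx in h3.
Qed.

Lemma f31 a b c d : a < b -> b < c -> inc d a -> inc d b -> d >=< c.
Proof.
move=> ab bc da db; apply/negPn/negP => dc; rewrite /inc in da db.
by move: H31 => /forallP/(_ a)/forallP/(_ b)/forallP/(_ c)/forallP/(_ d);
  rewrite ab bc da db dc.
Qed.

Definition Q c a d b :=
  [&& c < a, d < b, inc a b, inc c d, inc c b & inc d a].

Lemma QC c a d b : Q c a d b -> Q d b c a.
Proof.
by case/and5P=> h1 h2 h3 h4 /andP[h5 h6]; rewrite /Q h1 h2 incC h3 incC h4 h5 h6.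
Qed.

Lemma inDset x a : (x \in Dset a) = (x < a).
Proof. by rewrite inE. Qed.
Lemma inUset x a : (x \in Uset a) = (a < x).
Proof. by rewrite inE. Qed.

Lemma toprC : symmetric (@topr _ T).
Proof. by move=> a b; rewrite /topr andbC. Qed.
Lemma botrC : symmetric (@botr _ T).
Proof. by move=> a b; rewrite /botr andbC. Qed.

Lemma toprN a b : a < b -> ~~ topr a b.
Proof.
move=> ab; rewrite /topr negb_and !negbK; apply/orP; left.
by apply/subsetP=> x; rewrite !inDset => xa; apply: lt_trans ab.
Qed.

Lemma Q_of_topr a b c d : topr a b -> c < a -> ~~ (c < b) -> d < b -> ~~ (d < a) ->
  Q c a d b.
Proof.
move=> tab ca cb db da.
have nab : ~~ (a < b) by apply: contraL tab => /toprN.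
have nba : ~~ (b < a) by apply: contraL tab => /toprN; rewrite toprC.
have iab : inc a b.
  apply: notinc => //; apply: contraL tab => /eqP ->.
  by rewrite /topr subxx.
have icb : inc c b.
  apply: notinc => //.
    by apply: contra nba => bc; apply: lt_trans ca.
  by apply: contra nba => /eqP <-.
have ida : inc d a.
  apply: notinc => //.
    by apply: contra nab => ad; apply: lt_trans db.
  by apply: contra nab => /eqP <-.
have icd : inc c d.
  apply: notinc.
  - by apply: contra cb => cd; apply: lt_trans db.
  - by apply: contra da => dc; apply: lt_trans ca.
  - by apply: contra cb => /eqP ->.
by rewrite /Q ca db iab icd icb ida.
Qed.

Lemma topr_Q a b : topr a b -> exists c d, Q c a d b.
Proof.
move=> tab; have := tab; case/andP=> /subsetPn [c] cA cB /subsetPn [d] dB dA.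
exists c, d; apply: Q_of_topr => //; by rewrite -inDset.
Qed.

Lemma Q_topr c a d b : Q c a d b -> topr a b.
Proof.
case/and5P=> ca db _ _ /andP[cb da]; apply/andP; split; apply/subsetPn.
  by exists c; rewrite inDset // (inc_lt cb).
by exists d; rewrite inDset // (inc_lt da).
Qed.

Lemma Q_botr c a d b : Q c a d b -> botr c d.
Proof.
case/and5P=> ca db _ _ /andP[cb da]; apply/andP; split; apply/subsetPn.
  by exists a; rewrite !inUset // (inc_lt da).
by exists b; rewrite !inUset // (inc_lt cb).
Qed.

Lemma L1 a b z : topr a b -> a < z -> b < z.
Proof.
case/topr_Q=> c [d] /and5P[ca db iab icd /andP[icb ida]] az.
have := f31 (d:=b) ca az; rewrite incC icb incC iab => /(_ isT isT) /cmp3 [] //.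
  by move=> zb; move: (inc_lt iab); rewrite (lt_trans az zb).
by move=> zb; move: (inc_lt iab); rewrite zb az.
Qed.

Lemma cbr x y : botr x y -> connect (@botr _ T) x y.
Proof. exact: connect1. Qed.

Lemma cbrC x y : connect (@botr _ T) x y = connect (@botr _ T) y x.
Proof. by apply: (sym_connect_sym botrC). Qed.

Lemma ctrC x y : connect (@topr _ T) x y = connect (@topr _ T) y x.
Proof. by apply: (sym_connect_sym toprC). Qed.

Lemma E_lem a b c d b' c' d' : Q c a d b -> Q c' a d' b' ->
  connect (@botr _ T) c c'.
Proof.
move=> q1 q2.
have cd : connect br c d by apply/cbr/(Q_botr q1).
have c'd' : connect br d' c' by rewrite cbrC; apply/cbr/(Q_botr q2).
move: (q1) (q2) => /and5P[ca db iab icd /andP[icb ida]]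
  /and5P[c'a d'b' iab' ic'd' /andP[ic'b' id'a]].
have [db'|ndb'] := boolP (d < b').
  have q3 : Q c' a d b' by apply: Q_of_topr (Q_topr q2) _ _ _ _ => //;
    [exact: inc_lt ic'b' | exact: inc_lt ida].
  by apply: connect_trans cd _; rewrite cbrC; apply/cbr/(Q_botr q3).
have [d'b|nd'b] := boolP (d' < b).
  have q3 : Q c a d' b by apply: Q_of_topr (Q_topr q1) _ _ _ _ => //;
    [exact: inc_lt icb | exact: inc_lt id'a].
  by apply: connect_trans c'd'; apply/cbr/(Q_botr q3).
have dd' : botr d d'.
  apply/andP; split; apply/subsetPn.
    by exists b; rewrite !inUset.
  by exists b'; rewrite !inUset.
by apply: connect_trans c'd'; apply: connect_trans cd _; apply: cbr.
Qed.

Lemma K_lem a a' c d b c' d' b' : connect (@topr _ T) a a' ->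
  Q c a d b -> Q c' a' d' b' -> connect (@botr _ T) c c'.
Proof.
move/connectP=> [p]; elim: p a c d b => [|v p IH] a c d b /=.
  by move=> _ -> q1 q2; apply: E_lem q1 q2.
case/andP=> tav pth la q1 q2.
have [c0 [d0 q0]] := topr_Q tav.
have h1 : connect br d0 c' by apply: IH (QC q0) q2.
have h2 : connect br c c0 by apply: E_lem q1 q0.
by apply: connect_trans h2 _; apply: connect_trans h1; apply/cbr/(Q_botr q0).
Qed.

End Basic.

Lemma connect_prop (T : finType) (e : rel T) (P : T -> Prop) x y :
  (forall u v, e u v -> P u -> P v) -> connect e x y -> P x -> P y.
Proof.
move=> step /connectP [p]; elim: p x => [|v p IH] x /=; first by move=> _ ->.
by case/andP=> exv pth la Px; apply: IH pth la (step _ _ exv Px).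
Qed.

Section Dual.
Variables (disp : Order.disp_t) (T : finPOrderType disp).

Lemma free31_dual : free31 T -> free31 T^d.
Proof.
move=> H; apply/forallP=> a; apply/forallP=> b; apply/forallP=> c; apply/forallP=> d.
apply/negP=> /and5P[ab bc da db dc].
move: H => /forallP/(_ c)/forallP/(_ b)/forallP/(_ a)/forallP/(_ d).
have bc' : @Order.lt _ T c b := bc. have ab' : @Order.lt _ T b a := ab.
have da' : ~~ (@Order.comparable _ T d a) by rewrite comparable_sym; exact: da.
have db' : ~~ (@Order.comparable _ T d b) by rewrite comparable_sym; exact: db.
have dc' : ~~ (@Order.comparable _ T d c) by rewrite comparable_sym; exact: dc.
by rewrite bc' ab' da' db' dc'.
Qed.

Lemma Dset_dual (a : T) : Dset (T:=T^d) a = Uset a.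
Proof. by apply/setP=> x; rewrite !inE. Qed.
Lemma Uset_dual (a : T) : Uset (T:=T^d) a = Dset a.
Proof. by apply/setP=> x; rewrite !inE. Qed.
Lemma topr_dual : topr (T:=T^d) =2 botr (T:=T).
Proof. by move=> a b; rewrite /topr /botr !Dset_dual. Qed.
Lemma botr_dual : botr (T:=T^d) =2 topr (T:=T).
Proof. by move=> a b; rewrite /topr /botr !Uset_dual. Qed.
Lemma Q_dual (c a d b : T) : Q (T:=T^d) c a d b = Q a c b d.
Proof.
have e : forall x y : T, inc (T:=T^d) x y = inc y x by [].
have l : forall x y : T, (@Order.lt _ T^d x y) = (y < x) by [].
rewrite /Q !l !e (incC b a) (incC d c).
by case: (a<c); case: (b<d); case: (inc a b); case: (inc c d); case: (inc b c); case: (inc a d).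
Qed.

Lemma Q_of_botr (c d a b : T) : botr c d -> c < a -> ~~ (d < a) -> d < b -> ~~ (c < b) ->
  Q c a d b.
Proof.
move=> h1 h2 h3 h4 h5; rewrite -Q_dual; apply: Q_of_topr => //.
Qed.

Lemma botr_Q (c d : T) : botr c d -> exists a b, Q c a d b.
Proof.
rewrite -topr_dual => /topr_Q [a [b q]]; exists a, b; by rewrite -Q_dual.
Qed.

Lemma K_dual (a a' c d b c' d' b' : T) : connect (@botr _ T) c c' ->
  Q c a d b -> Q c' a' d' b' -> connect (@topr _ T) a a'.
Proof.
rewrite -(eq_connect (@topr_dual)) -!Q_dual => h q1 q2.
by rewrite -(eq_connect (@botr_dual)); apply: K_lem h q1 q2.
Qed.

Lemma L1_dual (H : free31 T) (c d z : T) : botr c d -> z < c -> z < d.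
Proof.
rewrite -topr_dual => h zc; exact: (L1 (free31_dual H) h zc).
Qed.
End Dual.


Section Comp.
Variables (disp : Order.disp_t) (T : finPOrderType disp) (e : rel T).
Hypotheses (se : symmetric e) (ie : irreflexive e).

Lemma comp_eq a x : connect e a x ->
  [set y | connect e a y] = [set y | connect e x y].
Proof.
move=> ax; apply/setP=> y; rewrite !inE; apply/idP/idP => h.
  by apply: connect_trans h; rewrite (sym_connect_sym se).
exact: connect_trans h.
Qed.

Lemma bc_in A x : A \in big_components e -> x \in A ->
  A = [set y | connect e x y].
Proof.
rewrite inE => /andP[_ /existsP[a /eqP->]]; rewrite inE => ax.
exact: comp_eq.
Qed.

Lemma bc_edge A x : A \in big_components e -> x \in A -> exists y, e x y.
Proof.
move=> hA xA; have := hA; rewrite inE => /andP[cA _].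
have [y yA yx] : exists2 y, y \in A & y != x.
  apply/exists_inP; apply: contraLR cA; rewrite negb_exists_in => /forall_inP h.
  rewrite -leqNgt; apply: (@leq_trans #|[set x]|); last by rewrite cards1.
  by apply/subset_leq_card/subsetP=> z /h; rewrite negbK inE.
move: yA; rewrite (bc_in hA xA) inE => /connectP [p].
case: p => [|v p] /=; first by move=> _ yx'; rewrite yx' eqxx in yx.
by case/andP=> xv _ _; exists v.
Qed.

Lemma bc_mk x y : e x y -> [set z | connect e x z] \in big_components e.
Proof.
move=> xy; rewrite inE; apply/andP; split; last by apply/existsP; exists x.
apply: (@leq_trans #|[set x; y]|).
  by rewrite cards2; case: eqP => // exy; rewrite exy ie in xy.
by apply/subset_leq_card/subsetP=> z; rewrite !inE => /orP[] /eqP->;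
  [exact: connect0 | exact: connect1].
Qed.

Lemma bc_conn A x y : A \in big_components e -> x \in A -> y \in A ->
  connect e x y.
Proof. by move=> hA xA; rewrite (bc_in hA xA) inE. Qed.

Lemma bc_closed A x y : A \in big_components e -> x \in A -> connect e x y ->
  y \in A.
Proof. by move=> hA xA; rewrite (bc_in hA xA) inE. Qed.

End Comp.

Section Grp.
Variables (disp : Order.disp_t) (T : finPOrderType disp).

Lemma AutP_group_set : group_set (AutP T).
Proof.
apply/group_setP; split.
  by rewrite inE; apply/forallP=> x; apply/forallP=> y; rewrite !perm1.
move=> s t; rewrite !inE => /forallP hs /forallP ht.
apply/forallP=> x; apply/forallP=> y; rewrite !permM.
move/forallP: (ht (s x)) => /(_ (s y)) /eqP ->.
by move/forallP: (hs x) => /(_ y).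
Qed.

Lemma AutPart_group_set (X : {set T}) : group_set (AutPart X).
Proof.
apply/group_setP; split.
  by rewrite inE perm_on1; apply/forall_inP=> x _; apply/forall_inP=> y _; rewrite !perm1.
move=> s t; rewrite !inE => /andP[ps /forall_inP hs] /andP[pt /forall_inP ht].
rewrite perm_onM //; apply/forall_inP=> x xX; apply/forall_inP=> y yX; rewrite !permM.
have sxX : s x \in X by rewrite (perm_closed _ ps).
have syX : s y \in X by rewrite (perm_closed _ ps).
move/forall_inP: (ht (s x) sxX) => /(_ (s y) syX) /eqP ->.
by move/forall_inP: (hs x xX) => /(_ y yX).
Qed.

End Grp.

Canonical AutP_group disp T := Group (@AutP_group_set disp T).
Canonical AutPart_group disp T X := Group (@AutPart_group_set disp T X).

Section Main.
Variables (disp : Order.disp_t) (T : finPOrderType disp).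
Hypothesis H31 : free31 T.
Implicit Types a b c d x y z : T.
Implicit Types A B X : {set T}.
Local Notation br := (@botr _ T).
Local Notation tr := (@topr _ T).

Lemma f31g a b c d : a < b -> b < c -> inc d a -> inc d b -> inc d c -> False.
Proof. by move=> ab bc da db; have := f31 H31 ab bc da db; rewrite /inc => ->. Qed.

Lemma C0 x y z : topr x y -> botr x z -> False.
Proof.
case/topr_Q=> c [d] /and5P[cx dy ixy icd /andP[icy idx]].
case/botr_Q=> p [q] /and5P[xp zq ipq ixz /andP[ixq izp]].
have yp : y < p.
  have := f31 H31 (d:=y) cx xp; rewrite incC icy incC ixy => /(_ isT isT) /cmp3 [] //.
    by move=> py; move: (inc_lt ixy); rewrite (lt_trans xp py).
  by move=> e; move: (inc_lt ixy); rewrite e xp.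
have cz : c < z.
  have h : z >=< c.
    apply/negPn/negP=> h; apply: (@f31g c x p z cx xp h) => //; by rewrite incC.
  case/cmp3: h => // [zc|zc].
    by move: (inc_gt ixz); rewrite (lt_trans zc cx).
  by move: (inc_gt ixz); rewrite zc cx.
have iyz : inc y z.
  apply: notinc.
  - apply/negP=> yz; apply: (@f31g d y z x dy yz) => //; by rewrite incC.
  - by apply/negP=> zy; move: (inc_lt izp); rewrite (lt_trans zy yp).
  - by apply/negP=> /eqP zy; move: (inc_lt izp); rewrite -zy yp.
have yq : y < q.
  have := f31 H31 (d:=y) cz zq; rewrite (incC y c) icy iyz => /(_ isT isT) /cmp3 [] //.
    by move=> qy; move: (inc_gt ipq); rewrite (lt_trans qy yp).
  by move=> e; move: (inc_gt ipq); rewrite -e yp.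
by apply: (@f31g d y q x dy yq); rewrite // incC.
Qed.

Lemma toprI : irreflexive tr.
Proof. by move=> x; rewrite /topr subxx. Qed.
Lemma botrI : irreflexive br.
Proof. by move=> x; rewrite /botr subxx. Qed.

Lemma tanglesP X : reflect (exists A B, [/\ A \in tops T, B \in bottoms T,
  matched A B & X = A :|: B]) (X \in tangles T).
Proof.
apply: (iffP imset2P).
  by case=> A B hA; rewrite inE => /andP[hB m] ->; exists A, B.
by case=> A [B] [hA hB m ->]; apply: (Imset2spec hA) => //; rewrite inE hB m.
Qed.

Lemma matchedQ A B : matched A B -> exists a1 a2 b1 b2,
  [/\ a1 \in A, a2 \in A, b1 \in B, b2 \in B & Q b1 a1 b2 a2].
Proof.
case/existsP=> a1 /andP[a1A /existsP[a2 /andP[a2A /existsP[b1 /andP[b1B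
  /existsP[b2 /andP[b2B /and5P[_ _ h1 h2 /and4P[h3 h4 h5 h6]]]]]]]]].
by exists a1, a2, b1, b2; split=> //; rewrite /Q /inc h1 h2 h3 h4 h5 h6.
Qed.

Lemma Qmatched A B a1 a2 b1 b2 : a1 \in A -> a2 \in A -> b1 \in B -> b2 \in B ->
  Q b1 a1 b2 a2 -> matched A B.
Proof.
move=> a1A a2A b1B b2B q; have := q; case/and5P=> h1 h2 h3 h4 /andP[h5 h6].
apply/existsP; exists a1; rewrite a1A; apply/existsP; exists a2; rewrite a2A.
apply/existsP; exists b1; rewrite b1B; apply/existsP; exists b2; rewrite b2B /=.
rewrite (inc_neq h3) (inc_neq h4) h1 h2; rewrite /inc in h3 h4 h5 h6; by rewrite h3 h4 h5 h6.
Qed.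


Definition tg A B := [/\ A \in tops T, B \in bottoms T & matched A B].

Lemma U_top A B B' : A \in tops T -> B \in bottoms T -> B' \in bottoms T ->
  matched A B -> matched A B' -> B = B'.
Proof.
move=> hA hB hB' /matchedQ [a1 [a2 [b1 [b2 [a1A a2A b1B b2B q]]]]]
  /matchedQ [a1' [a2' [b1' [b2' [a1A' a2A' b1B' b2B' q']]]]].
have h := K_lem (bc_conn (@toprC _ T) hA a1A a1A') q q'.
by rewrite (bc_in (@botrC _ T) hB b1B) (bc_in (@botrC _ T) hB' b1B'); apply: comp_eq (@botrC _ T) _ _ h.
Qed.

Lemma U_bot A A' B : A \in tops T -> A' \in tops T -> B \in bottoms T ->
  matched A B -> matched A' B -> A = A'.
Proof.
move=> hA hA' hB /matchedQ [a1 [a2 [b1 [b2 [a1A a2A b1B b2B q]]]]]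
  /matchedQ [a1' [a2' [b1' [b2' [a1A' a2A' b1B' b2B' q']]]]].
have h := K_dual (bc_conn (@botrC _ T) hB b1B b1B') q q'.
by rewrite (bc_in (@toprC _ T) hA a1A) (bc_in (@toprC _ T) hA' a1A'); apply: comp_eq (@toprC _ T) _ _ h.
Qed.

Lemma QA A B c p d q : tg A B -> Q c p d q -> p \in A -> c \in B.
Proof.
case=> hA hB /matchedQ [a1 [a2 [b1 [b2 [a1A a2A b1B b2B q1]]]]] q2 pA.
have h := K_lem (bc_conn (@toprC _ T) hA a1A pA) q1 q2.
exact: (bc_closed (@botrC _ T) hB b1B h).
Qed.

Lemma QB A B c p d q : tg A B -> Q c p d q -> c \in B -> p \in A.
Proof.
case=> hA hB /matchedQ [a1 [a2 [b1 [b2 [a1A a2A b1B b2B q1]]]]] q2 cB.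
have h := K_dual (bc_conn (@botrC _ T) hB b1B cB) q1 q2.
exact: (bc_closed (@toprC _ T) hA a1A h).
Qed.

Lemma topr_tg x y : topr x y -> exists A B, tg A B /\ x \in A.
Proof.
case/topr_Q=> c [d] q.
exists [set z | connect tr x z], [set z | connect br c z]; split; last first.
  by rewrite inE connect0.
split.
- exact: (bc_mk (@toprI) (Q_topr q)).
- exact: (bc_mk (@botrI) (Q_botr q)).
- apply: (Qmatched (a1:=x) (a2:=y) (b1:=c) (b2:=d) _ _ _ _ q);
    rewrite inE ?connect0 //; apply: connect1; [exact: Q_topr q | exact: Q_botr q].
Qed.

Lemma botr_tg c d : botr c d -> exists A B, tg A B /\ c \in B.
Proof.
case/botr_Q=> x [y] q.
exists [set z | connect tr x z], [set z | connect br c z]; split; last first.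
  by rewrite inE connect0.
split.
- exact: (bc_mk (@toprI) (Q_topr q)).
- exact: (bc_mk (@botrI) (Q_botr q)).
- apply: (Qmatched (a1:=x) (a2:=y) (b1:=c) (b2:=d) _ _ _ _ q);
    rewrite inE ?connect0 //; apply: connect1; [exact: Q_topr q | exact: Q_botr q].
Qed.

Lemma tg_tangle A B : tg A B -> A :|: B \in tangles T.
Proof. by case=> hA hB m; apply/tanglesP; exists A, B. Qed.

Lemma tfpP x : reflect (forall X, X \in tangles T -> x \notin X)
  (x \in tangle_free_part T).
Proof.
rewrite inE; apply: (iffP idP).
  by move=> h X hX; apply: contra h => xX; apply/bigcupP; exists X.
by move=> h; apply/bigcupP=> [[X hX xX]]; move: (h X hX); rewrite xX.
Qed.

Lemma topr_ntfp x y : topr x y -> x \notin tangle_free_part T.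
Proof.
case/topr_tg=> A [B] [h xA]; apply/negP=> /tfpP /(_ _ (tg_tangle h)).
by rewrite inE xA.
Qed.

Lemma botr_ntfp x y : botr x y -> x \notin tangle_free_part T.
Proof.
case/botr_tg=> A [B] [h xB]; apply/negP=> /tfpP /(_ _ (tg_tangle h)).
by rewrite inE xB orbT.
Qed.

Lemma tangle_disj X Y x : X \in tangles T -> Y \in tangles T -> x \in X -> x \in Y ->
  X = Y.
Proof.
case/tanglesP=> A [B] [hA hB m ->]; case/tanglesP=> A' [B'] [hA' hB' m' ->].
rewrite !inE => /orP[xA|xB] /orP[xA'|xB'].
- have eA : A = A' by rewrite (bc_in (@toprC _ T) hA xA) (bc_in (@toprC _ T) hA' xA').
  by subst A'; rewrite (U_top hA hB hB' m m').
- have [y xy] := bc_edge (@toprC _ T) hA xA; have [z xz] := bc_edge (@botrC _ T) hB' xB'.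
  by case: (C0 xy xz).
- have [y xy] := bc_edge (@toprC _ T) hA' xA'; have [z xz] := bc_edge (@botrC _ T) hB xB.
  by case: (C0 xy xz).
- have eB : B = B' by rewrite (bc_in (@botrC _ T) hB xB) (bc_in (@botrC _ T) hB' xB').
  by subst B'; rewrite (U_bot hA hA' hB m m').
Qed.


Section Tangle.
Variables (A B : {set T}).
Hypothesis hAB : tg A B.
Let hA : A \in tops T. Proof. by case: hAB. Qed.
Let hB : B \in bottoms T. Proof. by case: hAB. Qed.

Lemma AB_disj x : x \in A -> x \in B -> False.
Proof.
move=> xA xB; have [y xy] := bc_edge (@toprC _ T) hA xA.
have [z xz] := bc_edge (@botrC _ T) hB xB; exact: C0 xy xz.
Qed.

Lemma Uconst a a' z : a \in A -> a' \in A -> a < z -> a' < z.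
Proof.
move=> aA a'A; apply: (connect_prop (P := fun u => u < z)) (bc_conn (@toprC _ T) hA aA a'A).
by move=> u v uv /= uz; exact: (L1 H31 uv uz).
Qed.

Lemma Dconst b b' z : b \in B -> b' \in B -> z < b -> z < b'.
Proof.
move=> bB b'B; apply: (connect_prop (P := fun u => z < u)) (bc_conn (@botrC _ T) hB bB b'B).
by move=> u v uv /= zu; exact: (L1_dual H31 uv zu).
Qed.

Lemma B_below b : b \in B -> exists2 a, a \in A & b < a.
Proof.
move=> bB; have [b' bb'] := bc_edge (@botrC _ T) hB bB.
have [p [q0 q]] := botr_Q bb'; exists p; first exact: QB hAB q bB.
by case/andP: q.
Qed.

Lemma A_above a : a \in A -> exists2 b, b \in B & b < a.
Proof.
move=> aA; have [a' aa'] := bc_edge (@toprC _ T) hA aA.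
have [c [d q]] := topr_Q aa'; exists c; first exact: QA hAB q aA.
by case/andP: q.
Qed.

Lemma A_max a x : a \in A -> x \in A :|: B -> ~~ (a < x).
Proof.
move=> aA; rewrite inE => /orP[xA|xB]; apply/negP=> ax.
  by have := Uconst aA xA ax; rewrite ltxx.
have [a' a'A xa'] := B_below xB.
by have := Uconst aA a'A (lt_trans ax xa'); rewrite ltxx.
Qed.

Lemma B_char x : x \in A :|: B -> (x \in B) = [exists y in A :|: B, x < y].
Proof.
move=> xX; apply/idP/idP.
  by move=> xB; have [a aA xa] := B_below xB; apply/exists_inP; exists a;
    rewrite // inE aA.
case/exists_inP=> y yX xy; move: xX; rewrite inE => /orP[xA|] //.
by move: (A_max xA yX); rewrite xy.
Qed.

Lemma notX_notA z : z \notin A :|: B -> forall a, a \in A -> ~~ topr z a.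
Proof.
move=> zX a aA; apply/negP=> za.
have az : topr a z by rewrite toprC.
have : z \in A by exact: (bc_closed (@toprC _ T) hA aA (connect1 az)).
by move: zX; rewrite inE negb_or => /andP[/negP].
Qed.

Lemma notX_notB z : z \notin A :|: B -> forall b, b \in B -> ~~ botr z b.
Proof.
move=> zX b bB; apply/negP=> zb.
have bz : botr b z by rewrite botrC.
have : z \in B by exact: (bc_closed (@botrC _ T) hB bB (connect1 bz)).
by move: zX; rewrite inE negb_or => /andP[_ /negP].
Qed.

Lemma Lz z x y : z \notin A :|: B -> x \in A :|: B -> y \in A :|: B ->
  (x \in B) = (y \in B) -> x < z -> y < z.
Proof.
move=> zX xX yX eB xz; have [xB|xnB] := boolP (x \in B).
  have yB : y \in B by rewrite -eB.
  suff : y \in B /\ y < z by case.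
  apply: (connect_prop (P := fun u => u \in B /\ u < z)) (bc_conn (@botrC _ T) hB xB yB) _.
    move=> u v uv /= [uB uz]; split; first exact: (bc_closed (@botrC _ T) hB uB (connect1 uv)).
    have [p [q0 q]] := botr_Q uv.
    have vB : v \in B by exact: (bc_closed (@botrC _ T) hB uB (connect1 uv)).
    have q0A : q0 \in A := QB hAB (QC q) vB.
    have := notX_notA zX q0A; rewrite /topr negb_and !negbK => /orP[/subsetP h|/subsetP h].
      by move: q => /and5P[_ _ _ _ /andP[iuq _]]; move: (inc_lt iuq);
        rewrite -inDset (h u) // inDset.
    by rewrite -inDset; apply: h; rewrite inDset; case/and5P: q.
  by split.
have xA : x \in A by move: xX; rewrite inE (negbTE xnB) orbF.
have yA : y \in A by move: yX; rewrite inE -eB (negbTE xnB) orbF.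
exact: Uconst xA yA xz.
Qed.

Lemma Gz z x y : z \notin A :|: B -> x \in A :|: B -> y \in A :|: B ->
  (x \in B) = (y \in B) -> z < x -> z < y.
Proof.
move=> zX xX yX eB zx; have [xB|xnB] := boolP (x \in B).
  have yB : y \in B by rewrite -eB.
  exact: Dconst xB yB zx.
have xA : x \in A by move: xX; rewrite inE (negbTE xnB) orbF.
have yA : y \in A by move: yX; rewrite inE -eB (negbTE xnB) orbF.
suff : y \in A /\ z < y by case.
apply: (connect_prop (P := fun u => u \in A /\ z < u)) (bc_conn (@toprC _ T) hA xA yA) _.
  move=> u v uv /= [uA zu].
  have vA : v \in A by exact: (bc_closed (@toprC _ T) hA uA (connect1 uv)).
  split=> //.
  have [c [d q]] := topr_Q uv.
  have cB : c \in B := QA hAB q uA.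
  have dB : d \in B by exact: (bc_closed (@botrC _ T) hB cB (connect1 (Q_botr q))).
  have := notX_notB zX dB; rewrite /botr negb_and !negbK => /orP[/subsetP h|/subsetP h].
    by move: q => /and5P[_ _ _ _ /andP[_ idu]]; move: (inc_lt idu);
      rewrite -inUset (h u) // inUset.
  by rewrite -inUset; apply: h; rewrite inUset; case/and5P: q.
by split.
Qed.

End Tangle.

Lemma AutPP s : s \in AutP T -> forall x y, (s x <= s y) = (x <= y).
Proof. by rewrite inE => /forallP h x y; apply/eqP; move/forallP: (h x). Qed.

Lemma AutP_lt s : s \in AutP T -> forall x y, (s x < s y) = (x < y).
Proof. by move=> h x y; rewrite !lt_def (AutPP h) (inj_eq perm_inj). Qed.

Lemma AutP_ext X s : perm_on X s ->
  {in X &, forall x y, (s x <= s y) = (x <= y)} ->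
  (forall x z, x \in X -> z \notin X -> ((x < z) = (s x < z)) /\ ((z < x) = (z < s x))) ->
  s \in AutP T.
Proof.
move=> ps hX hO; rewrite inE; apply/forallP=> x; apply/forallP=> y; apply/eqP.
have [xX|xnX] := boolP (x \in X); have [yX|ynX] := boolP (y \in X).
- exact: hX.
- have sxX : s x \in X by rewrite (perm_closed _ ps).
  rewrite (out_perm ps ynX) !le_eqVlt (hO _ _ xX ynX).1.
  have -> : (s x == y) = false by apply/negbTE; apply: contraNneq ynX => <-.
  by have -> : (x == y) = false by apply/negbTE; apply: contraNneq ynX => <-.
- have syX : s y \in X by rewrite (perm_closed _ ps).
  rewrite (out_perm ps xnX) !le_eqVlt (hO _ _ yX xnX).2.
  have -> : (x == s y) = false by apply/negbTE; apply: contraNneq xnX => ->.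
  by have -> : (x == y) = false by apply/negbTE; apply: contraNneq xnX => ->.
- by rewrite (out_perm ps xnX) (out_perm ps ynX).
Qed.

Lemma AutPart_lt X s : s \in AutPart X -> {in X &, forall x y, (s x < s y) = (x < y)}.
Proof.
rewrite inE => /andP[_ /forall_inP h] x y xX yX.
by rewrite !lt_def (inj_eq perm_inj); move/forall_inP: (h x xX) => /(_ y yX) /eqP ->.
Qed.

Lemma AutPart_le X s : s \in AutPart X -> {in X &, forall x y, (s x <= s y) = (x <= y)}.
Proof.
by rewrite inE => /andP[_ /forall_inP h] x y xX yX; move/forall_inP: (h x xX) => /(_ y yX) /eqP.
Qed.

Lemma AutPart_on X s : s \in AutPart X -> perm_on X s.
Proof. by rewrite inE => /andP[]. Qed.

Lemma tangle_aut A B s : tg A B -> s \in AutPart (A :|: B) -> s \in AutP T.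
Proof.
move=> h hs; have ps := AutPart_on hs; set X := A :|: B.
have hlt := AutPart_lt hs.
have eB : forall x, x \in X -> (x \in B) = (s x \in B).
  move=> x xX; have sxX : s x \in X by rewrite (perm_closed _ ps).
  rewrite (B_char h xX) (B_char h sxX); apply/idP/idP => /exists_inP[y yX xy].
    by apply/exists_inP; exists (s y); rewrite ?(perm_closed _ ps) ?hlt.
  apply/exists_inP; exists (s^-1 y)%g.
    by rewrite (perm_closed _ (perm_onV ps)).
  by rewrite -(hlt x) ?permKV // (perm_closed _ (perm_onV ps)).
apply: (AutP_ext ps (AutPart_le hs)) => x z xX zX.
have sxX : s x \in X by rewrite (perm_closed _ ps).
split; apply/idP/idP.
- exact: (Lz h zX xX sxX (eB x xX)).
- by apply: (Lz h zX sxX xX); rewrite (eB x xX).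
- exact: (Gz h zX xX sxX (eB x xX)).
- by apply: (Gz h zX sxX xX); rewrite (eB x xX).
Qed.

Lemma cloneP C : reflect (exists2 x0, x0 \in tangle_free_part T &
  C = [set y in tangle_free_part T | approx x0 y]) (C \in clone_sets T).
Proof. exact: imsetP. Qed.

Lemma cloneE x0 x : (x \in [set y in tangle_free_part T | approx x0 y]) =
  (x \in tangle_free_part T) && approx x0 x.
Proof. by rewrite [in LHS]inE. Qed.

Lemma approxE a b : approx a b -> Dset a = Dset b /\ Uset a = Uset b.
Proof. by case/andP=> /eqP-> /eqP->. Qed.

Lemma clone_aut C s : C \in clone_sets T -> s \in AutPart C -> s \in AutP T.
Proof.
case/cloneP=> x0 _ eC hs; have ps := AutPart_on hs.
apply: (AutP_ext ps (AutPart_le hs)) => x z xC zC.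
have sxC : s x \in C by rewrite (perm_closed _ ps).
move: xC sxC; rewrite eC !inE => /andP[_ /approxE[D1 U1]] /andP[_ /approxE[D2 U2]].
by split; [rewrite -!inUset -U1 U2 | rewrite -!inDset -D1 D2].
Qed.

Lemma part_aut X : X \in parts T -> AutPart X \subset AutP T.
Proof.
rewrite inE => /orP[hC|/tanglesP[A [B [hA hB m ->]]]]; apply/subsetP=> s hs.
  exact: clone_aut hC hs.
by apply: (tangle_aut (A:=A) (B:=B)).
Qed.

Lemma Dset_aut s x : s \in AutP T -> Dset (s x) = s @: Dset x.
Proof.
move=> h; apply/setP=> y; rewrite -preim_permV !inE -{1}(permKV s y).
by rewrite (AutP_lt h).
Qed.

Lemma Uset_aut s x : s \in AutP T -> Uset (s x) = s @: Uset x.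
Proof.
move=> h; apply/setP=> y; rewrite -preim_permV !inE -{1}(permKV s y).
by rewrite (AutP_lt h).
Qed.

Lemma card_eq_or (D1 D2 : {set T}) : #|D1| = #|D2| ->
  D1 = D2 \/ (~~ (D1 \subset D2) && ~~ (D2 \subset D1)).
Proof.
move=> e; case: (boolP (D1 \subset D2)) => h.
  left; apply/eqP; rewrite eqEcard h e; exact: leqnn.
case: (boolP (D2 \subset D1)) => h'.
  left; apply/esym/eqP; rewrite eqEcard h' e; exact: leqnn.
by right.
Qed.

Lemma aut_D s x : s \in AutP T -> Dset (s x) = Dset x \/ topr x (s x).
Proof.
move=> h; have := @card_eq_or (Dset (s x)) (Dset x).
rewrite Dset_aut // card_imset; last exact: perm_inj.
case=> // [->|]; first by left.
by rewrite -Dset_aut // /topr andbC => ->; right.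
Qed.

Lemma aut_U s x : s \in AutP T -> Uset (s x) = Uset x \/ botr x (s x).
Proof.
move=> h; have := @card_eq_or (Uset (s x)) (Uset x).
rewrite Uset_aut // card_imset; last exact: perm_inj.
case=> // [->|]; first by left.
by rewrite -Uset_aut // /botr andbC => ->; right.
Qed.

Lemma ntfp_tangle x : x \notin tangle_free_part T ->
  exists2 X, X \in tangles T & x \in X.
Proof. by rewrite inE negbK => /bigcupP[X hX xX]; exists X. Qed.

Lemma aut_part s X x : s \in AutP T -> X \in parts T -> x \in X -> s x \in X.
Proof.
move=> hs; rewrite inE => /orP[/cloneP[x0 x0t ->]|/tanglesP[A [B [hA hB m ->]]]].
  rewrite !cloneE => /andP[xt ax].
  have eD : Dset (s x) = Dset x.
    by case: (aut_D x hs) => // /topr_ntfp; rewrite xt.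
  have eU : Uset (s x) = Uset x.
    by case: (aut_U x hs) => // /botr_ntfp; rewrite xt.
  apply/andP; split; last first.
    by rewrite /approx; move: ax => /andP[/eqP-> /eqP->]; rewrite eD eU !eqxx.
  apply/negPn/negP => /ntfp_tangle [Y /tanglesP[A' [B' [hA' hB' m' ->]]]].
  rewrite inE => /orP[sxA|sxB].
    have [v sv] := bc_edge (@toprC _ T) hA' sxA.
    have : topr x v by move: sv; rewrite /topr eD.
    by move/topr_ntfp; rewrite xt.
  have [v sv] := bc_edge (@botrC _ T) hB' sxB.
  have : botr x v by move: sv; rewrite /botr eU.
  by move/botr_ntfp; rewrite xt.
rewrite !inE => /orP[xA|xB].
  case: (aut_D x hs) => [eD|txs]; apply/orP; left; last first.
    exact: (bc_closed (@toprC _ T) hA xA (connect1 txs)).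
  have [v xv] := bc_edge (@toprC _ T) hA xA.
  have vA : v \in A := bc_closed (@toprC _ T) hA xA (connect1 xv).
  have vs : topr v (s x) by rewrite toprC /topr eD.
  exact: (bc_closed (@toprC _ T) hA vA (connect1 vs)).
case: (aut_U x hs) => [eU|bxs]; apply/orP; right; last first.
  exact: (bc_closed (@botrC _ T) hB xB (connect1 bxs)).
have [v xv] := bc_edge (@botrC _ T) hB xB.
have vB : v \in B := bc_closed (@botrC _ T) hB xB (connect1 xv).
have vs : botr v (s x) by rewrite botrC /botr eU.
exact: (bc_closed (@botrC _ T) hB vB (connect1 vs)).
Qed.

Lemma approx_refl x : approx x x.
Proof. by rewrite /approx !eqxx. Qed.

Lemma parts_cover x : exists2 X, X \in parts T & x \in X.
Proof.
have [xt|xnt] := boolP (x \in tangle_free_part T).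
  exists [set y in tangle_free_part T | approx x y].
    by rewrite inE; apply/orP; left; apply/imsetP; exists x.
  by rewrite cloneE xt approx_refl.
have [X hX xX] := ntfp_tangle xnt; exists X => //.
by rewrite inE hX orbT.
Qed.

Lemma approx_eq a x y : approx a x -> approx a y = approx x y.
Proof. by rewrite /approx => /andP[/eqP-> /eqP->]. Qed.

Lemma clone_tfp C x : C \in clone_sets T -> x \in C -> x \in tangle_free_part T.
Proof. by case/cloneP=> x0 _ ->; rewrite cloneE => /andP[]. Qed.

Lemma parts_disj X Y x : X \in parts T -> Y \in parts T -> x \in X -> x \in Y ->
  X = Y.
Proof.
rewrite !inE => /orP[hX|hX] /orP[hY|hY] xX xY.
- move: (hX) (hY) => /cloneP[x1 _ e1] /cloneP[x2 _ e2].
  move: xX xY; rewrite e1 e2 !cloneE => /andP[_ a1] /andP[_ a2].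
  by apply/setP=> y; rewrite !cloneE (approx_eq _ a1) (approx_eq _ a2).
- by move: (clone_tfp hX xX) => /tfpP /(_ Y hY); rewrite xY.
- by move: (clone_tfp hY xY) => /tfpP /(_ X hX); rewrite xX.
- exact: tangle_disj hX hY xX xY.
Qed.

Definition UP (r : seq {set T}) := \bigcup_(X <- r) X.
Definition M (r : seq {set T}) := AutP T :&: Sym (UP r).

Lemma perm_onS (S1 S2 : {set T}) s : S1 \subset S2 -> perm_on S1 s -> perm_on S2 s.
Proof. by move=> h p; apply: subset_trans p h. Qed.

Lemma disj_UP X r : X \in parts T -> all (mem (parts T)) r -> X \notin r ->
  [disjoint X & UP r].
Proof.
move=> hX /allP hr Xr; rewrite -setI_eq0; apply/eqP/setP=> x; rewrite /UP bigcup_seq !inE.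
apply/negP=> /andP[xX /bigcupP[Y Yr xY]].
have e := parts_disj hX (hr Y Yr) xX xY.
by move: Xr; rewrite e Yr.
Qed.

Lemma autN s X : s \in AutP T -> X \in parts T -> s \in 'N(X | 'P)%g.
Proof.
move=> hs hX; apply/astabsP=> x; rewrite /=; apply/idP/idP.
  move=> sxX; have := aut_part (groupVr hs) hX sxX.
  by rewrite -permM mulgV perm1.
exact: aut_part.
Qed.

Lemma restr_AutPart s X : s \in AutP T -> X \in parts T ->
  restr_perm X s \in AutPart X.
Proof.
move=> hs hX; have hN := autN hs hX.
rewrite inE restr_perm_on; apply/forall_inP=> x xX; apply/forall_inP=> y yX.
by rewrite !restr_permE // (AutPP hs).
Qed.

Lemma step X r : X \in parts T -> all (mem (parts T)) r -> X \notin r ->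
  (AutPart X \x M r)%g = M (X :: r).
Proof.
move=> hX hr Xr; have dj := disj_UP hX hr Xr.
have eU : UP (X :: r) = X :|: UP r by rewrite /UP big_cons.
rewrite (@dprodE _ (AutPart_group X) [group of M r]).
- apply/setP=> s; apply/mulsgP/idP.
    case=> t u ht; rewrite inE => /andP[hu]; rewrite inE => pu ->.
    rewrite inE groupM //; last exact: (subsetP (part_aut hX)).
    rewrite inE eU; apply: perm_onM.
      by apply: perm_onS (AutPart_on ht); apply: subsetUl.
    by apply: perm_onS pu; apply: subsetUr.
  rewrite inE => /andP[hs]; rewrite inE eU => ps.
  set t := restr_perm X s.
  have ht : t \in AutPart X by apply: restr_AutPart.
  have htA : t \in AutP T by apply: (subsetP (part_aut hX)).
  have hN := autN hs hX.
  exists t (t^-1 * s)%g => //; last by rewrite mulKVg.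
  rewrite inE groupM ?groupV //= inE; apply/subsetP=> x; rewrite inE; apply: contraR => xU.
  rewrite permM; have [xX|xnX] := boolP (x \in X).
    have yX : (t^-1)%g x \in X by rewrite (perm_closed _ (perm_onV (restr_perm_on _ _))).
    by rewrite -(restr_permE hN yX) permKV.
  rewrite (out_perm (perm_onV (restr_perm_on _ _)) xnX).
  by apply/eqP; apply: (out_perm ps); rewrite inE negb_or xnX.
- apply/subsetP=> u; rewrite !inE => /andP[_ pu]; apply/centP=> t ht.
  exact: (esym (perm_onC (AutPart_on ht) pu dj)).
- apply/trivgP/subsetP=> s; rewrite inE => /andP[hs]; rewrite !inE => /andP[_ ps].
  apply/eqP/permP=> x; rewrite perm1.
  have [xX|xnX] := boolP (x \in X).
    apply: (out_perm ps); apply: contraL dj => xU; rewrite -setI_eq0.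
    by apply/set0Pn; exists x; rewrite inE xX.
  exact: (out_perm (AutPart_on hs)).
Qed.

Lemma big_M r : uniq r -> all (mem (parts T)) r ->
  (\big[dprod/1]_(X <- r) AutPart X)%g = M r.
Proof.
elim: r => [|X r IH] /=.
  move=> _ _; rewrite big_nil; apply/setP=> s; rewrite /M in_setI; apply/idP/idP.
    by move/set1gP->; rewrite group1 inE perm_on1.
  case/andP=> _; rewrite inE => ps; apply/set1gP; apply: (perm_on_id ps).
  by rewrite /UP big_nil cards0.
case/andP=> Xr uq /andP[hX hr]; rewrite big_cons IH //.
exact: step.
Qed.

Theorem main_thm :
  (forall X, X \in parts T -> AutPart X \subset AutP T) /\
  (\big[dprod/1]_(X in parts T) AutPart X)%g = AutP T.
Proof.
split; first exact: part_aut.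
rewrite -big_enum big_M ?enum_uniq; last by apply/allP=> X; rewrite mem_enum.
apply/setP=> s; rewrite inE; apply/andb_idr=> _; rewrite inE.
apply/subsetP=> x _; have [X hX xX] := parts_cover x.
rewrite /UP bigcup_seq; apply/bigcupP; exists X.
- rewrite mem_enum. exact: hX.
- exact: xX.
- by [].
Qed.

End Main.

Theorem theorem2p14 (disp : Order.disp_t) (T : finPOrderType disp) :
  free31 T ->
  (forall X, X \in parts T -> AutPart X \subset AutP T) /\
  (\big[dprod/1]_(X in parts T) AutPart X)%g = AutP T.
Proof. exact: main_thm. Qed.
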